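(* Let $f:[0,1]\times\mathbb{R}\to\mathbb{R}$ satisfy: (C(c)) $f$ is continuous on $[0,1]\times\mathbb{R}$ and has a continuous partial derivative $f_x$ with respect to the second variable; (D(f)) there exist positive constants $A,B$ with $A<1$ such that $|f(t,x)|\leqslant A|x|+B$ for all $t\in[0,1]$, $x\in\mathbb{R}$; (D($f_x$)) $\inf_{[0,1]\times\mathbb{R}} f_x>-1$; and let (D(v)) $v:[0,1]\to\mathbb{R}$ be continuous. Let $x^\star$ be the unique solution in $H^2(0,1)\cap H^1_0(0,1)$ of $\ddot{x}(t)=f(t,x(t))+v(t)$, $x(0)=x(1)=0$, and for each $N\in\mathbb{N}$, $N\geqslant2$, let $x_N:\{0,\dots,N\}\to\mathbb{R}$ be the unique solution of $$\Delta^2x(k-1)=\tfrac{1}{N^2}f\left(\tfrac{k}{N},x(k)\right)+\tfrac{1}{N^2}v\left(\tfrac{k}{N}\right),\ k=1,\dots,N-1,\qquad x(0)=x(N)=0.$$ Then $\lim_{N\to\infty}\max_{k\in\{0,\dots,N\}}\left|x^\star\left(\tfrac{k}{N}\right)-x_N(k)\right|=0$.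
   Context: $\Delta x(k-1)=x(k)-x(k-1)$, $\Delta^2x(k-1)=x(k+1)-2x(k)+x(k-1)$. $H^1_0(0,1)$: absolutely continuous functions on $[0,1]$ vanishing at $0$ and $1$ with derivative in $L^2$; $H^2(0,1)$: functions in $H^1(0,1)$ whose derivative is in $H^1(0,1)$. *)

(* Defs.v *)
From Stdlib Require Import Reals Lra List.
From Coquelicot Require Import Coquelicot.
Open Scope R_scope.

Definition cont_on_strip (g : R -> R -> R) : Prop :=
  forall t x, 0 <= t <= 1 -> forall eps, 0 < eps -> exists delta, 0 < delta /\
    forall s y, 0 <= s <= 1 -> Rabs (s - t) < delta -> Rabs (y - x) < delta ->
      Rabs (g s y - g t x) < eps.

Definition cont_on_01 (h : R -> R) : Prop :=
  forall t, 0 <= t <= 1 -> forall eps, 0 < eps -> exists delta, 0 < delta /\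
    forall s, 0 <= s <= 1 -> Rabs (s - t) < delta -> Rabs (h s - h t) < eps.

Definition cond_C (f : R -> R -> R) : Prop :=
  cont_on_strip f /\
  exists fx : R -> R -> R,
    (forall t x, 0 <= t <= 1 -> is_derive (fun y => f t y) x (fx t x)) /\
    cont_on_strip fx.

Definition cond_Df (f : R -> R -> R) : Prop :=
  exists A B, 0 < A < 1 /\ 0 < B /\
    forall t x, 0 <= t <= 1 -> Rabs (f t x) <= A * Rabs x + B.

(* (D(f_x)): inf over [0,1] x R of f_x is > -1, i.e. some m > -1 is a lower bound *)
Definition cond_Dfx (f : R -> R -> R) : Prop :=
  exists m, -1 < m /\
    forall t x, 0 <= t <= 1 -> m <= Derive (fun y => f t y) x.

(* x is a solution in H^2(0,1) ∩ H^1_0(0,1) of x'' = f(t,x) + v(t), x(0)=x(1)=0.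
   Since the right-hand side is continuous, such solutions are exactly the
   functions continuous on [0,1], twice differentiable on (0,1) with
   x'' = f(t,x(t)) + v(t) there, vanishing at 0 and 1. *)
Definition bvp_solution (f : R -> R -> R) (v : R -> R) (x : R -> R) : Prop :=
  cont_on_01 x /\ x 0 = 0 /\ x 1 = 0 /\
  (forall t, 0 < t < 1 -> ex_derive x t) /\
  (forall t, 0 < t < 1 ->
     is_derive (Derive x) t (f t (x t) + v t)).

Definition discrete_solution (f : R -> R -> R) (v : R -> R) (N : nat) (x : nat -> R) : Prop :=
  x 0%nat = 0 /\ x N = 0 /\
  forall k : nat, (1 <= k <= N - 1)%nat ->
    x (S k) - 2 * x k + x (k - 1)%nat =
      / (INR N ^ 2) * f (INR k / INR N) (x k) + / (INR N ^ 2) * v (INR k / INR N).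

Definition max_err (xs : R -> R) (N : nat) (x : nat -> R) : R :=
  fold_right Rmax 0
    (map (fun k => Rabs (xs (INR k / INR N) - x k)) (seq 0 (S N))).

(* Main.v *)
Require Import Defs.
From Stdlib Require Import Reals Lra Lia List.
From Coquelicot Require Import Coquelicot.
Open Scope R_scope.

Fixpoint sm (F : nat -> R) (n : nat) : R :=
  match n with O => 0 | S p => sm F p + F p end.

Lemma sm_ext F G n : (forall i, (i < n)%nat -> F i = G i) -> sm F n = sm G n.
Proof. induction n; simpl; intros H; auto. rewrite IHn; [rewrite H|]; auto; intros; apply H; lia. Qed.

Lemma sm_le F G n : (forall i, (i < n)%nat -> F i <= G i) -> sm F n <= sm G n.
Proof. induction n; simpl; intros H. lra. assert (sm F n <= sm G n) by (apply IHn; intros; apply H; lia).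
 assert (F n <= G n) by (apply H; lia). lra. Qed.

Lemma sm_plus F G n : sm (fun i => F i + G i) n = sm F n + sm G n.
Proof. induction n; simpl; lra. Qed.

Lemma sm_scal c F n : sm (fun i => c * F i) n = c * sm F n.
Proof. induction n; simpl; try rewrite IHn; ring. Qed.

Lemma sm_nonneg F n : (forall i, (i < n)%nat -> 0 <= F i) -> 0 <= sm F n.
Proof. intros H. replace 0 with (sm (fun _ => 0) n). apply sm_le; auto.
 induction n; simpl; auto. rewrite IHn; [lra|]. intros; apply H; lia. Qed.

Lemma sm_mono F a b : (forall i, 0 <= F i) -> (a <= b)%nat -> sm F a <= sm F b.
Proof. intros H Hab. induction Hab. lra. simpl. specialize (H m). lra. Qed.

Lemma sm_abs F n : Rabs (sm F n) <= sm (fun i => Rabs (F i)) n.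
Proof. induction n; simpl. rewrite Rabs_R0; lra.
 eapply Rle_trans. apply Rabs_triang. lra. Qed.

Lemma sm_CS F n : (sm F n)^2 <= INR n * sm (fun i => (F i)^2) n.
Proof. induction n; cbn [sm]. simpl; lra.
 set (A := sm F n) in *. set (Sq := sm (fun i => F i ^ 2) n) in *. set (a := F n).
 rewrite S_INR. assert (0 <= Sq) by (apply sm_nonneg; intros; apply pow2_ge_0).
 assert (0 <= INR n) by apply pos_INR.
 assert (2*A*a <= Sq + INR n * a^2).
 { destruct (Req_dec (INR n) 0) as [Z|Z].
   - rewrite Z in IHn. assert (A = 0) by nra. subst. nra.
   - assert (0 < INR n) by lra.
     assert (0 <= (A - INR n * a)^2) by apply pow2_ge_0.
     assert (INR n * (Sq + INR n * a^2 - 2*A*a) >= 0) by nra.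
     destruct (Rle_lt_dec 0 (Sq + INR n * a^2 - 2*A*a)); [lra|]. nra. }
 nra. Qed.

Lemma sm_const c n : sm (fun _ => c) n = INR n * c.
Proof. induction n; cbn [sm]. simpl; ring. rewrite IHn, S_INR. ring. Qed.

Lemma tele e k : e 0%nat = 0 -> e k = sm (fun i => e (S i) - e i) k.
Proof. intros H0; induction k; simpl; auto. rewrite <- IHk. ring. Qed.

Lemma energy_id e p : e 0%nat = 0 ->
  sm (fun i => (e (S (S i)) - 2 * e (S i) + e i) * e (S i)) p =
  - sm (fun i => (e (S i) - e i)^2) (S p) + (e (S p) - e p) * e (S p).
Proof. intros H0. induction p; simpl.
 - rewrite H0. ring.
 - simpl in IHp. rewrite IHp. ring. Qed.

Lemma energy (n : nat) (e tau : nat -> R) (m T : R) :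
 -1 < m -> 0 <= T -> e 0%nat = 0 -> e (S n) = 0 ->
 (forall k, (1 <= k <= n)%nat ->
    (e (S k) - 2 * e k + e (k-1)%nat) * e k >= / (INR (S n))^2 * m * (e k)^2 + tau k * e k) ->
 (forall k, (1 <= k <= n)%nat -> Rabs (tau k) <= T) ->
 forall k, (k <= S n)%nat -> (1 + Rmin m 0) * Rabs (e k) <= T * (INR (S n))^2.
Proof.
 intros Hm HT He0 HeN Hr Ht.
 set (N := INR (S n)).
 assert (HN : 1 <= N) by (unfold N; rewrite S_INR; pose proof (pos_INR n); lra).
 set (D := sm (fun i => (e (S i) - e i)^2) (S n)).
 set (E := sm (fun i => (e (S i))^2) n).
 set (S1 := sm (fun i => Rabs (e (S i))) n).
 assert (HD0 : 0 <= D) by (apply sm_nonneg; intros; apply pow2_ge_0).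
 assert (Hpt : forall k, (k <= S n)%nat -> (e k)^2 <= N * D).
 { intros k Hk. rewrite (tele e k He0). eapply Rle_trans. apply sm_CS.
   apply Rmult_le_compat. apply pos_INR. apply sm_nonneg; intros; apply pow2_ge_0.
   apply le_INR; auto. apply sm_mono; auto. intros; apply pow2_ge_0. }
 assert (HE : E <= INR n * (N * D)).
 { unfold E. eapply Rle_trans. apply (sm_le _ (fun _ => N * D)). intros; apply Hpt; lia.
   rewrite sm_const. lra. }
 assert (HE0 : 0 <= E) by (apply sm_nonneg; intros; apply pow2_ge_0).
 assert (HS10 : 0 <= S1) by (apply sm_nonneg; intros; apply Rabs_pos).
 assert (HS1 : S1^2 <= INR n * E).
 { unfold S1, E. eapply Rle_trans. apply sm_CS. right. f_equal. apply sm_ext. intros.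
   rewrite <- Rsqr_pow2, <- Rsqr_abs, Rsqr_pow2. auto. }
 assert (Hn : INR n <= N) by (unfold N; rewrite S_INR; lra).
 assert (Hn0 : 0 <= INR n) by apply pos_INR.
 assert (Hid := energy_id e n He0). rewrite HeN in Hid.
 replace (- sm (fun i => (e (S i) - e i) ^ 2) (S n) + (0 - e n) * 0) with (-D) in Hid by (unfold D; ring).
 assert (Hlow : sm (fun i => (e (S (S i)) - 2 * e (S i) + e i) * e (S i)) n >=
    /N^2 * m * E + sm (fun i => tau (S i) * e (S i)) n).
 { unfold E. rewrite <- sm_scal, <- sm_plus. apply Rle_ge, sm_le. intros i Hi.
   specialize (Hr (S i) ltac:(lia)). replace (S i - 1)%nat with i in Hr by lia.
   unfold N. lra. }
 assert (Htau : Rabs (sm (fun i => tau (S i) * e (S i)) n) <= T * S1).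
 { eapply Rle_trans. apply sm_abs. unfold S1. rewrite <- sm_scal. apply sm_le.
   intros i Hi. rewrite Rabs_mult. apply Rmult_le_compat_r. apply Rabs_pos. apply Ht; lia. }
 assert (HN2 : 0 < N^2) by nra.
 assert (HEs : /N^2 * E <= D).
 { apply Rmult_le_reg_l with (N^2); auto. rewrite <- Rmult_assoc, Rinv_r by lra.
   assert (INR n * (N * D) <= N^2 * D).
   { replace (N^2*D) with (N*(N*D)) by ring. apply Rmult_le_compat_r; [apply Rmult_le_pos|]; lra. }
   lra. }
 set (kap := 1 + Rmin m 0).
 assert (Hkap : 0 < kap) by (unfold kap, Rmin; destruct Rle_dec; lra).
 assert (Hk1 : kap * D <= T * S1).
 { assert (Hb : kap * D <= D + /N^2 * m * E).
   { unfold kap, Rmin; destruct Rle_dec.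
     - assert (m * (/N^2 * E) >= m * D) by nra. nra.
     - assert (0 <= /N^2) by (apply Rlt_le, Rinv_0_lt_compat; lra).
       assert (0 <= /N^2 * m * E) by (repeat apply Rmult_le_pos; lra). lra. }
   pose proof (Rle_abs (- sm (fun i => tau (S i) * e (S i)) n)). rewrite Rabs_Ropp in H. lra. }
 assert (Hk2 : kap^2 * D <= T^2 * N^3).
 { destruct (Req_dec D 0) as [Z|Z]. rewrite Z. assert (0 <= T^2*N^3) by (apply Rmult_le_pos; apply pow_le; lra). lra.
   assert (kap^2 * D^2 <= T^2 * S1^2).
   { replace (kap^2*D^2) with ((kap*D)^2) by ring. replace (T^2*S1^2) with ((T*S1)^2) by ring.
     apply pow_incr. split; [apply Rmult_le_pos|]; lra. }
   assert (S1^2 <= N^3 * D).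
   { assert (INR n * E <= N * (INR n * (N * D))).
     { apply Rmult_le_compat; try lra. }
     assert (INR n * (N * D) <= N * (N * D)) by (apply Rmult_le_compat_r; [apply Rmult_le_pos|]; lra).
     assert (N * (INR n * (N * D)) <= N * (N * (N * D))) by (apply Rmult_le_compat_l; lra).
     replace (N^3*D) with (N * (N * (N * D))) by ring. lra. }
   assert (kap^2 * D^2 <= T^2 * (N^3 * D)).
   { assert (T^2 * S1^2 <= T^2 * (N^3*D)) by (apply Rmult_le_compat_l; [apply pow2_ge_0|lra]). lra. }
   assert (0 < D) by lra.
   apply Rmult_le_reg_r with D; auto. replace (kap^2*D*D) with (kap^2*D^2) by ring.
   replace (T^2*N^3*D) with (T^2*(N^3*D)) by ring. lra. }
 intros k Hk. specialize (Hpt k Hk).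
 assert ((kap * Rabs (e k))^2 <= (T * N^2)^2).
 { replace ((kap * Rabs (e k))^2) with (kap^2 * (e k)^2).
   2:{ rewrite Rpow_mult_distr. f_equal. rewrite <- !Rsqr_pow2. rewrite <- Rsqr_abs. auto. }
   assert (kap^2 * (e k)^2 <= kap^2 * (N * D)) by (apply Rmult_le_compat_l; [apply pow2_ge_0|lra]).
   assert (kap^2 * (N * D) <= N * (T^2 * N^3)).
   { replace (kap^2 * (N*D)) with (N * (kap^2*D)) by ring. apply Rmult_le_compat_l; lra. }
   replace ((T*N^2)^2) with (N*(T^2*N^3)) by ring. lra. }
 apply Rsqr_incr_0_var. rewrite !Rsqr_pow2; auto. apply Rmult_le_pos; [lra|apply pow_le; lra]. Qed.

Definition clamp (s : R) := Rmax 0 (Rmin 1 s).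
Lemma clamp_in s : 0 <= clamp s <= 1.
Proof. unfold clamp, Rmax, Rmin; repeat destruct Rle_dec; lra. Qed.
Lemma clamp_id s : 0 <= s <= 1 -> clamp s = s.
Proof. unfold clamp, Rmax, Rmin; repeat destruct Rle_dec; lra. Qed.
Lemma clamp_lip s t : Rabs (clamp s - clamp t) <= Rabs (s - t).
Proof. unfold clamp, Rmax, Rmin; repeat destruct Rle_dec; unfold Rabs; repeat destruct Rcase_abs; lra. Qed.

Lemma cont_clamp h : cont_on_01 h -> forall x, continuity_pt (fun s => h (clamp s)) x.
Proof. intros H x eps Heps.
 destruct (H (clamp x) (clamp_in x) eps Heps) as [d [Hd Hc]].
 exists d; split; auto. intros y [_ Hy]. simpl in *. unfold R_dist in *.
 apply Hc. apply clamp_in. pose proof (clamp_lip y x). lra. Qed.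

Lemma g_cont f xs v : cont_on_strip f -> cont_on_01 xs -> cont_on_01 v ->
  cont_on_01 (fun t => f t (xs t) + v t).
Proof. intros Hf Hx Hv t Ht eps Heps.
 destruct (Hf t (xs t) Ht (eps/2) ltac:(lra)) as [d1 [Hd1 H1]].
 destruct (Hx t Ht d1 Hd1) as [d2 [Hd2 H2]].
 destruct (Hv t Ht (eps/2) ltac:(lra)) as [d3 [Hd3 H3]].
 exists (Rmin d1 (Rmin d2 d3)). split. repeat apply Rmin_pos; auto.
 intros s Hs Hst.
 assert (Rabs (s - t) < d1) by (eapply Rlt_le_trans; [apply Hst|apply Rmin_l]).
 assert (Rabs (s - t) < d2) by (eapply Rlt_le_trans; [apply Hst|eapply Rle_trans;[apply Rmin_r|apply Rmin_l]]).
 assert (Rabs (s - t) < d3) by (eapply Rlt_le_trans; [apply Hst|eapply Rle_trans;[apply Rmin_r|apply Rmin_r]]).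
 specialize (H1 s (xs s) Hs H (H2 s Hs H0)). specialize (H3 s Hs H4).
 replace (f s (xs s) + v s - (f t (xs t) + v t)) with ((f s (xs s) - f t (xs t)) + (v s - v t)) by ring.
 eapply Rle_lt_trans. apply Rabs_triang. lra. Qed.

Lemma g_unif g : cont_on_01 g -> forall eps, 0 < eps -> exists d, 0 < d /\
  forall s t, 0 <= s <= 1 -> 0 <= t <= 1 -> Rabs (s - t) < d -> Rabs (g s - g t) < eps.
Proof. intros Hg eps Heps.
 destruct (Heine (fun s => g (clamp s)) (fun c => 0 <= c <= 1) (compact_P3 0 1)
   (fun x _ => cont_clamp g Hg x) (mkposreal eps Heps)) as [d Hd].
 exists d; split. apply cond_pos. intros s t Hs Ht Hst.
 specialize (Hd s t Hs Ht Hst). simpl in Hd. rewrite !clamp_id in Hd; auto. Qed.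

Lemma deriv_y xs z : 0 < z < 1 -> ex_derive xs z ->
  is_derive (fun s => xs (clamp s)) z (Derive xs z).
Proof. intros Hz Hd. apply is_derive_ext_loc with xs.
 2: apply Derive_correct; auto.
 assert (Hp : 0 < Rmin z (1 - z)) by (apply Rmin_pos; lra).
 exists (mkposreal _ Hp). intros y Hy. unfold ball in Hy; simpl in Hy. unfold AbsRing_ball in Hy.
 unfold abs, minus, plus, opp in Hy; simpl in Hy.
 pose proof (Rmin_l z (1-z)). pose proof (Rmin_r z (1-z)).
 rewrite clamp_id; auto. unfold Rabs in Hy; destruct Rcase_abs in Hy; lra. Qed.

Lemma deriv_cont (F : R -> R) z l : is_derive F z l -> continuity_pt F z.
Proof. intros H. apply continuity_pt_filterlim. exact (ex_derive_continuous F z (ex_intro _ l H)). Qed.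

Lemma f_mvt (F : R -> R) (dF : R -> R) : (forall x, is_derive F x (dF x)) ->
  forall a b, exists c, F a - F b = Derive F c * (a - b).
Proof. intros H a b.
 destruct (MVT_gen F b a (Derive F)) as [c [_ Hc]].
 - intros x _. apply Derive_correct. exists (dF x); auto.
 - intros x _. eapply deriv_cont; eauto.
 - exists c; auto. Qed.

Lemma phi_der (y : R -> R) t s K h a b : h <> 0 -> is_derive y (t+s) a -> is_derive y (t-s) b ->
  is_derive (fun s => y (t + s) + y (t - s) - 2 * y t - s^2 * K / h^2) s (a - b - 2 * s * K / h^2).
Proof. intros Hh Ha Hb.
 assert (Ea : ex_derive y (t+s)) by (exists a; auto).
 assert (Eb : ex_derive y (t-s)) by (exists b; auto).
 auto_derive. repeat split; auto. 
 change (fun x : R => y x) with y. replace (t + - s) with (t - s) by ring.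
 rewrite (is_derive_unique _ _ _ Ha), (is_derive_unique _ _ _ Hb). field. auto. Qed.

Lemma second_diff xs g : cont_on_01 xs -> (forall t, 0 < t < 1 -> ex_derive xs t) ->
  (forall t, 0 < t < 1 -> is_derive (Derive xs) t (g t)) ->
  forall t h, 0 < h -> 0 <= t - h -> t + h <= 1 ->
  exists xi, t - h < xi < t + h /\ 0 < xi < 1 /\
    xs (t + h) - 2 * xs t + xs (t - h) = h^2 * g xi.
Proof. intros Hc Hd Hdd t h Hh H0 H1.
 set (y := fun s => xs (clamp s)).
 set (K := xs (t + h) - 2 * xs t + xs (t - h)).
 set (phi := fun s => y (t + s) + y (t - s) - 2 * y t - s^2 * K / h^2).
 assert (Hphi : forall s, 0 < s < h -> is_derive phi s (Derive xs (t + s) - Derive xs (t - s) - 2 * s * K / h^2)).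
 { intros s Hs. unfold phi.
   assert (Ia : 0 < t + s < 1) by lra. assert (Ib : 0 < t - s < 1) by lra.
   assert (Ha := deriv_y xs (t+s) Ia (Hd _ Ia)).
   assert (Hb := deriv_y xs (t-s) Ib (Hd _ Ib)).
   fold y in Ha, Hb.
   apply phi_der; auto; lra. }
 assert (Hyc : forall z, continuity_pt y z) by (apply cont_clamp; auto).
 assert (Hcont : forall s, 0 <= s <= h -> continuity_pt phi s).
 { intros s _. unfold phi.
   apply continuity_pt_minus. apply continuity_pt_minus. apply continuity_pt_plus.
   - apply (continuity_pt_comp (fun s => t + s) y). apply continuity_pt_plus. apply continuity_pt_const. intros a b; auto. apply continuity_pt_id. apply Hyc.
   - apply (continuity_pt_comp (fun s => t - s) y). apply continuity_pt_minus. apply continuity_pt_const. intros a b; auto. apply continuity_pt_id. apply Hyc.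
   - apply continuity_pt_const. intros a b; auto.
   - apply continuity_pt_div. apply continuity_pt_mult. apply derivable_continuous_pt. apply derivable_pt_pow.
     apply continuity_pt_const. intros a b; auto. apply continuity_pt_const. intros a b; auto. apply pow_nonzero; lra. }
 assert (pr : forall s, 0 < s < h -> derivable_pt phi s).
 { intros s Hs. apply ex_derive_Reals_0. eexists. apply Hphi; auto. }
 assert (Hy01 : forall s, 0 <= s <= 1 -> y s = xs s) by (intros; unfold y; rewrite clamp_id; auto).
 assert (Hph0 : phi 0 = phi h).
 { unfold phi. rewrite !Hy01 by lra. replace (t + 0) with t by ring. replace (t - 0) with t by ring.
   unfold K. field. lra. }
 destruct (Rolle phi 0 h pr Hcont Hh Hph0) as [c [Pc Hc0]].
 rewrite Derive_Reals in Hc0. rewrite (is_derive_unique _ _ _ (Hphi c Pc)) in Hc0.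
 destruct (MVT_gen (Derive xs) (t - c) (t + c) g) as [xi [Hxi Hm]].
 - intros x Hx. rewrite Rmin_left in Hx by lra. rewrite Rmax_right in Hx by lra. apply Hdd. lra.
 - intros x Hx. rewrite Rmin_left in Hx by lra. rewrite Rmax_right in Hx by lra.
   eapply deriv_cont. apply Hdd. lra.
 - rewrite Rmin_left in Hxi by lra. rewrite Rmax_right in Hxi by lra.
   exists xi. split. lra. split. lra. fold K.
   assert (Hc2 : 2 * c * K / h^2 = g xi * (2 * c)) by lra.
   assert (h^2 <> 0) by (apply pow_nonzero; lra).
   apply Rmult_eq_reg_l with (2 * c / h^2). 2: { unfold Rdiv; apply Rmult_integral_contrapositive; split; [lra|]. apply Rinv_neq_0_compat; auto. }
   replace (2 * c / h^2 * K) with (2 * c * K / h^2) by (field; lra). rewrite Hc2. field. lra.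
Qed.

Lemma fold_max_le l b : 0 <= b -> (forall x, In x l -> x <= b) -> fold_right Rmax 0 l <= b.
Proof. intros Hb; induction l; simpl; intros H; auto.
 apply Rmax_lub. apply H; auto. apply IHl; auto. Qed.

Lemma fold_max_ge0 l : 0 <= fold_right Rmax 0 l.
Proof. induction l; simpl. lra. eapply Rle_trans; [apply IHl|apply Rmax_r]. Qed.

Lemma t_bounds k N : (k <= N)%nat -> (0 < N)%nat -> 0 <= INR k / INR N <= 1.
Proof. intros H1 H2. apply le_INR in H1. apply lt_INR in H2. simpl in H2.
 pose proof (pos_INR k). split. apply Rmult_le_pos; auto. apply Rlt_le, Rinv_0_lt_compat; lra.
 apply Rmult_le_reg_r with (INR N); auto. unfold Rdiv. rewrite Rmult_assoc, Rinv_l by lra. lra. Qed.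

Theorem theorem7 (f : R -> R -> R) (v : R -> R) (xstar : R -> R)
  (xN : nat -> nat -> R) :
  cond_C f -> cond_Df f -> cond_Dfx f -> cont_on_01 v ->
  bvp_solution f v xstar ->
  (forall N : nat, (2 <= N)%nat -> discrete_solution f v N (xN N)) ->
  is_lim_seq (fun N => max_err xstar N (xN N)) 0.
Proof.
 intros [Hfc [fx [Hfx Hfxc]]] _ [m [Hm Hmb]] Hv [Hxc [Hx0 [Hx1 [Hxd Hxdd]]]] Hdisc.
 set (g := fun t => f t (xstar t) + v t).
 assert (Hgc : cont_on_01 g) by (apply g_cont; auto).
 set (kap := 1 + Rmin m 0).
 assert (Hkap : 0 < kap) by (unfold kap, Rmin; destruct Rle_dec; lra).
 apply is_lim_seq_spec. intros eps.
 pose proof (cond_pos eps) as Heps.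
 destruct (g_unif g Hgc (eps * kap / 2)) as [d [Hd Hu]]. { apply Rmult_lt_0_compat; [apply Rmult_lt_0_compat|]; lra. }
 destruct (archimed_cor1 d Hd) as [N1 [HN1 HN1p]].
 exists (N1 + 2)%nat. intros N HN.
 assert (Hbound : forall k, (k <= N)%nat -> Rabs (xstar (INR k / INR N) - xN N k) <= eps / 2).
 { destruct N as [|n]; [lia|].
   assert (Hn1 : (1 <= n)%nat) by lia.
   destruct (Hdisc (S n) ltac:(lia)) as [D0 [DN Deq]].
   set (NN := INR (S n)) in *.
   assert (HNN : 2 <= NN) by (unfold NN; replace 2 with (INR 2) by (simpl; lra); apply le_INR; lia).
   assert (Hh : / NN < d).
   { eapply Rle_lt_trans; [|apply HN1]. apply Rinv_le_contravar. apply lt_0_INR; lia.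
     unfold NN; apply le_INR; lia. }
   assert (HNN2 : 0 < / NN ^ 2) by (apply Rinv_0_lt_compat; nra).
   set (e := fun k => xstar (INR k / NN) - xN (S n) k).
   set (tau := fun k => xstar (INR (S k) / NN) - 2 * xstar (INR k / NN) + xstar (INR (k-1) / NN) - / NN^2 * g (INR k / NN)).
   intros k Hk.
   assert (Htb : forall k, (k <= S n)%nat -> 0 <= INR k / NN <= 1) by (intros; apply t_bounds; lia).
   assert (HT0 : 0 <= /NN^2 * (eps*kap/2)) by (apply Rmult_le_pos; [lra|]; apply Rmult_le_pos; [apply Rmult_le_pos|]; lra).
   assert (He0 : e 0%nat = 0).
   { unfold e. simpl INR. unfold Rdiv. rewrite Rmult_0_l, Hx0, D0. ring. }
   assert (HeN : e (S n) = 0).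
   { unfold e. fold NN. unfold Rdiv. rewrite Rinv_r by lra. rewrite Hx1, DN. ring. }
   assert (Hstep : forall k, (1 <= k <= n)%nat ->
      (e (S k) - 2 * e k + e (k-1)%nat) * e k >= / (INR (S n))^2 * m * (e k)^2 + tau k * e k).
   { intros j Hj. fold NN. set (t := INR j / NN).
     assert (Ht : 0 <= t <= 1) by (apply Htb; lia).
     destruct (f_mvt (fun y => f t y) (fx t) (fun x => Hfx t x Ht) (xstar t) (xN (S n) j)) as [c Hc].
     pose proof (Hmb t c Ht) as Hmc.
     set (Dc := Derive (fun y => f t y) c) in *.
     assert (Eq : e (S j) - 2 * e j + e (j-1)%nat = tau j + /NN^2 * (Dc * e j)).
     { unfold e, tau, g. fold t. unfold e in Hc. fold t in Hc. rewrite <- Hc.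
       specialize (Deq j ltac:(lia)). fold NN in Deq. fold t in Deq. 
       replace (/NN^2 * (f t (xstar t) - f t (xN (S n) j))) with (/NN^2 * f t (xstar t) - /NN^2 * f t (xN (S n) j)) by ring.
       lra. }
     rewrite Eq.
     assert (0 <= /NN^2 * (Dc - m) * (e j)^2).
     { apply Rmult_le_pos; [apply Rmult_le_pos|apply pow2_ge_0]; lra. }
     assert (Hx : (tau j + / NN ^ 2 * (Dc * e j)) * e j = tau j * e j + /NN^2 * m * (e j)^2 + /NN^2 * (Dc - m) * (e j)^2) by ring.
     rewrite Hx. lra. }
   assert (Htau : forall k, (1 <= k <= n)%nat -> Rabs (tau k) <= /NN^2 * (eps*kap/2)).
   { intros j Hj. set (t := INR j / NN).
     assert (Ht : 0 <= t <= 1) by (apply Htb; lia).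
     assert (Hj1 : 1 <= INR j) by (replace 1 with (INR 1) by (simpl; lra); apply le_INR; lia).
     assert (Hjn : INR j + 1 <= NN) by (unfold NN; rewrite S_INR; apply Rplus_le_compat_r, le_INR; lia).
     assert (Hh0 : 0 < / NN) by (apply Rinv_0_lt_compat; lra).
     assert (Ha : 0 <= t - / NN) by (unfold t; apply Rmult_le_reg_r with NN; [lra|]; field_simplify; lra).
     assert (Hb : t + / NN <= 1) by (unfold t; apply Rmult_le_reg_r with NN; [lra|]; field_simplify; lra).
     destruct (second_diff xstar g Hxc Hxd Hxdd t (/NN) Hh0 Ha Hb) as [xi [Hxi1 [Hxi2 Hxi]]].
     assert (E1 : INR (S j) / NN = t + / NN) by (unfold t; rewrite S_INR; field; lra).
     assert (E2 : INR (j - 1) / NN = t - / NN) by (unfold t; rewrite minus_INR by lia; simpl INR; field; lra).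
     assert (Etau : tau j = /NN^2 * (g xi - g t)).
     { unfold tau. fold t. rewrite E1, E2, Hxi. field. lra. }
     rewrite Etau, Rabs_mult, Rabs_pos_eq by lra.
     apply Rmult_le_compat_l; [lra|]. left. apply Hu; try lra.
     unfold Rabs; destruct Rcase_abs; lra. }
   pose proof (energy n e tau m (/NN^2 * (eps*kap/2)) Hm HT0 He0 HeN Hstep Htau k Hk) as HE.
   fold NN in HE. unfold e in HE. fold kap in HE.
   replace (/ NN ^ 2 * (eps * kap / 2) * NN ^ 2) with (kap * (eps / 2)) in HE by (field; lra).
   apply Rmult_le_reg_l with kap; auto. }
 unfold max_err. rewrite Rminus_0_r, Rabs_pos_eq by apply fold_max_ge0.
 eapply Rle_lt_trans. apply fold_max_le with (b := eps/2). lra.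
 intros x Hin. apply in_map_iff in Hin. destruct Hin as [k [Hk Hin]]. subst x.
 apply in_seq in Hin. apply Hbound. lia. lra.
Qed.
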